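(* Let $A$ be a real $n\times n$ matrix with strictly negative diagonal entries such that all $2\times2$ and all $3\times3$ principal minors of $A$ vanish. Then $G_A$ is the complete graph, $A$ is a bipartite matrix, and $\operatorname{rank}A=1$.
   Context: The connectivity graph $G_A$ is the simple graph on $\{1,\dots,n\}$ containing edge $(ij)$, $i\ne j$, unless $A_{ij}=A_{ji}=0$. A principal minor is the determinant of a principal submatrix $A_\sigma$ (rows and columns indexed by $\sigma$). A real $n\times n$ matrix $A$ is bipartite if $\{1,\dots,n\}$ can be partitioned into disjoint sets $\sigma,\bar\sigma$ such that: if $i\in\sigma,j\in\bar\sigma$ then $A_{ij}\ge0$ and $A_{ji}\ge0$; and if $i,j\in\sigma$ or $i,j\in\bar\sigma$ then $A_{ij}\le0$ and $A_{ji}\le0$. *)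

(* Defs.v *)
From HB Require Import structures.
From mathcomp Require Import all_boot all_order all_algebra.
Set Implicit Arguments. Unset Strict Implicit. Unset Printing Implicit Defensive.
Import Order.TTheory GRing.Theory Num.Theory.
Local Open Scope ring_scope.

(* Principal submatrix A_sigma: rows and columns indexed by sigma, both
   enumerated in the same (increasing) order. *)
Definition principal_submx (R : ringType) (n : nat) (A : 'M[R]_n)
    (sigma : {set 'I_n}) : 'M[R]_#|sigma| :=
  \matrix_(i, j) A (enum_val i) (enum_val j).

Definition principal_minor (R : comRingType) (n : nat) (A : 'M[R]_n)
    (sigma : {set 'I_n}) : R :=
  \det (principal_submx A sigma).

Definition conn_edge (R : ringType) (n : nat) (A : 'M[R]_n) : rel 'I_n :=
  fun i j => (i != j) && ~~ ((A i j == 0) && (A j i == 0)).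

Definition conn_graph_complete (R : ringType) (n : nat) (A : 'M[R]_n) : Prop :=
  forall i j : 'I_n, i != j -> conn_edge A i j.

Definition bipartite_matrix (R : numDomainType) (n : nat) (A : 'M[R]_n) : Prop :=
  exists sigma : {set 'I_n},
    (forall i j : 'I_n, i \in sigma -> j \notin sigma ->
        0 <= A i j /\ 0 <= A j i) /\
    (forall i j : 'I_n, (i \in sigma) = (j \in sigma) ->
        A i j <= 0 /\ A j i <= 0).

(* Main.v *)
Require Import Defs.
From HB Require Import structures.
From mathcomp Require Import all_boot all_order all_algebra.
Import Order.TTheory GRing.Theory Num.Theory.
Local Open Scope ring_scope.

Lemma det2 (R : comNzRingType) (M : 'M[R]_2) :
  \det M = M 0 0 * M 1 1 - M 0 1 * M 1 0.
Proof.
rewrite (expand_det_row _ 0) !big_ord_recl big_ord0 /cofactor !det_mx11 !mxE /=.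
have -> : lift 0 0 = 1 :> 'I_2 by apply/val_inj.
have -> : lift 1 0 = 0 :> 'I_2 by apply/val_inj.
rewrite /bump /= expr0 expr1 addr0 !mul1r mulN1r mulrN.
by [].
Qed.
Lemma det3 (R : comNzRingType) (M : 'M[R]_3) :
  \det M = M 0 0 * (M 1 1 * M 2 2 - M 1 2 * M 2 1)
         - M 0 1 * (M 1 0 * M 2 2 - M 1 2 * M 2 0)
         + M 0 2 * (M 1 0 * M 2 1 - M 1 1 * M 2 0).
Proof.
rewrite (expand_det_row _ 0) !big_ord_recl big_ord0 /cofactor !det2 !mxE /=.
have -> : lift 0 0 = 1 :> 'I_3 by apply/val_inj.
have -> : lift 0 1 = 2 :> 'I_3 by apply/val_inj.
have -> : lift 1 0 = 0 :> 'I_3 by apply/val_inj.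
have -> : lift 1 1 = 2 :> 'I_3 by apply/val_inj.
have -> : lift 0 0 = 1 :> 'I_2 by apply/val_inj.
have -> : lift 0 1 = 2 :> 'I_3 by apply/val_inj.
have -> : lift 2 0 = 0 :> 'I_3 by apply/val_inj.
have -> : lift 2 1 = 1 :> 'I_3 by apply/val_inj.
rewrite /bump /= !expr0 !expr1 ?expr2 !addr0 !mul1r !mulN1r ?mulNr ?mulrN ?opprK ?mul1r.
by rewrite addrA.
Qed.


Lemma pq_lemma (R : idomainType) (P Q c : R) :
  P - c + (Q - c) = 0 -> P * Q = c * c -> P = c /\ Q = c.
Proof.
move=> hs hp.
set d := P - c.
have hQ : Q - c = - d by apply/eqP; rewrite -addr_eq0 addrC hs.
have eP : P = c + d by rewrite subrKC.
have eQ : Q = c - d by rewrite -hQ subrKC.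
have h0 : c ^+ 2 - d ^+ 2 = P * Q by rewrite eP eQ mulrC -subr_sqr.
have h1 : c ^+ 2 - d ^+ 2 = c ^+ 2 - 0 by rewrite h0 hp subr0 expr2.
have hd : d = 0.
  move/addrI: h1 => h1. move/oppr_inj: h1 => h1. by apply/eqP; rewrite -sqrf_eq0 h1.
by rewrite eP eQ hd addr0 subr0.
Qed.

Lemma alg3 (R : idomainType) (ax ay az xy yx yz zy xz zx : R) :
  xy * yx = ax * ay -> yz * zy = ay * az -> xz * zx = ax * az ->
  ax * (ay * az - yz * zy) - xy * (yx * az - yz * zx) + xz * (yx * zy - ay * zx) = 0 ->
  xy * yz * zx = ax * ay * az /\ xz * zy * yx = ax * ay * az.
Proof.
move=> h1 h2 h3 hd; apply: pq_lemma.
  rewrite -hd h2 subrr mulr0 add0r !mulrBr.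
  rewrite [xy * (yx * az)]mulrA h1 [xy * (yz * zx)]mulrA [yx * zy]mulrC [xz * (zy * yx)]mulrA.
  rewrite [xz * (ay * zx)]mulrCA h3 [ay * (ax * az)]mulrCA [ax * (ay * az)]mulrA.
  by rewrite opprB.
rewrite [LHS](AC (3*3) ((1*6)*(2*5)*(3*4))) /= h1 h2 [zx * xz]mulrC h3.
by rewrite [LHS](AC ((2*2)*2) ((1*2*4)*(5*3*6))).
Qed.


Lemma minor_eq (R : realFieldType) (n : nat) (A : 'M[R]_n) (s : {set 'I_n})
  (k : nat) (h : #|s| = k) :
  exists g : 'I_k -> 'I_n, injective g /\ (forall a, g a \in s) /\
    principal_minor A s = \det (\matrix_(a, b) A (g a) (g b)).
Proof.
exists (fun a => enum_val (cast_ord (esym h) a)); split.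
  by move=> a b /enum_val_inj/cast_ord_inj.
split=> [a|]; first exact: enum_valP.
rewrite /principal_minor; case: k / h.
congr (\det _); apply/matrixP => a b; rewrite !mxE !cast_ord_id.
by [].
Qed.

Lemma perm3 (n : nat) (P : 'I_n -> 'I_n -> 'I_n -> Prop)
  (rot : forall u v w, P u v w -> P v w u) (i j k x y z : 'I_n) :
  x \in [set i; j; k] -> y \in [set i; j; k] -> z \in [set i; j; k] ->
  x != y -> x != z -> y != z -> P x y z -> P x z y -> P i j k.
Proof.
rewrite !inE => hx hy hz.
move: hx => /orP[/orP[]|] /eqP->; move: hy => /orP[/orP[]|] /eqP->;
 move: hz => /orP[/orP[]|] /eqP->;
 rewrite ?eqxx //= => _ _ _ h1 h2;
 first [exact h1 | exact h2 | exact (rot _ _ _ h1) | exact (rot _ _ _ h2)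
       | exact (rot _ _ _ (rot _ _ _ h1)) | exact (rot _ _ _ (rot _ _ _ h2))].
Qed.

Section Main.
Variables (R : realFieldType) (n : nat) (A : 'M[R]_n).
Hypothesis hdiag : forall i : 'I_n, A i i < 0.
Hypothesis hm2 : forall s : {set 'I_n}, #|s| = 2%N -> principal_minor A s = 0.
Hypothesis hm3 : forall s : {set 'I_n}, #|s| = 3%N -> principal_minor A s = 0.

Lemma diag_neq0 i : A i i != 0.
Proof. exact: ltr0_neq0. Qed.

Lemma pairA (i j : 'I_n) : i != j -> A i j * A j i = A i i * A j j.
Proof.
move=> ij.
have h2 : #|[set i; j]| = 2%N by rewrite cards2 ij.
have [g [ginj [gin hg]]] := @minor_eq _ _ A _ _ h2.
move: (hm2 _ h2); rewrite hg det2 !mxE => /eqP; rewrite subr_eq0 => /eqP e.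
have g01 : g 0 != g 1 by rewrite (inj_eq ginj).
move: (gin 0) (gin 1) g01 e; rewrite !inE.
move=> /orP[]/eqP-> /orP[]/eqP->; rewrite ?eqxx //= => _ e;
  by first [rewrite e | rewrite [RHS]mulrC e [RHS]mulrC].
Qed.

Arguments pairA {i j}.

Lemma offdiag_neq0 (i j : 'I_n) : i != j -> A i j != 0.
Proof.
move=> ij; apply/eqP => h; move: (pairA ij); rewrite h mul0r => /esym/eqP.
by rewrite mulf_eq0 !(negbTE (diag_neq0 _)).
Qed.

Arguments offdiag_neq0 {i j}.

Definition T3 (u v w : 'I_n) := A u v * A v w * A w u = A u u * A v v * A w w.

Lemma T3rot u v w : T3 u v w -> T3 v w u.
Proof.
rewrite /T3 => h; rewrite [LHS](AC 3 (3*1*2)) /= h.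
by rewrite [LHS](AC 3 (2*3*1)).
Qed.

Lemma tripleA (i j k : 'I_n) : i != j -> i != k -> j != k -> T3 i j k.
Proof.
move=> ij ik jk.
have h3 : #|[set i; j; k]| = 3%N.
  by rewrite setUC cardsU1 cards2 !inE ij (eq_sym k i) (eq_sym k j) (negbTE ik) (negbTE jk).
have [g [ginj [gin hg]]] := @minor_eq _ _ A _ _ h3.
move: (hm3 _ h3); rewrite hg det3 !mxE => e.
have g01 : g 0 != g 1 by rewrite (inj_eq ginj).
have g02 : g 0 != g 2 by rewrite (inj_eq ginj).
have g12 : g 1 != g 2 by rewrite (inj_eq ginj).
have [t1 t2] := @alg3 _ _ _ _ _ _ _ _ _ _ (pairA g01) (pairA g12) (pairA g02) e.
apply: (@perm3 _ _ T3rot _ _ _ _ _ _ (gin 0) (gin 1) (gin 2) g01 g02 g12) => //.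
by rewrite /T3 t2 mulrAC.
Qed.

Arguments tripleA {i j k}.

Lemma keyL (i0 i j : 'I_n) : A i j * A i0 i = A i i * A i0 j.
Proof.
have [->|hi] := eqVneq i i0; first by rewrite mulrC.
have [->|hj] := eqVneq j i0; first by rewrite pairA.
have [<-|hij] := eqVneq i j; first by [].
have t := tripleA hij hi hj.
apply: (mulIf (offdiag_neq0 hj)).
rewrite mulrAC t -mulrA.
have hj' : i0 != j by rewrite eq_sym.
by rewrite -[RHS]mulrA (pairA hj') [A i0 i0 * _]mulrC.
Qed.


Lemma s_neq0 (i0 i : 'I_n) : A i0 i != 0.
Proof.
have [->|h] := eqVneq i0 i; first exact: diag_neq0.
exact: offdiag_neq0.
Qed.

Lemma completeA : conn_graph_complete A.
Proof.
move=> i j ij; rewrite /conn_edge ij /=; apply/negP => /andP[/eqP h _].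
by move: (offdiag_neq0 ij); rewrite h eqxx.
Qed.

Lemma rank1 (i0 : 'I_n) : \rank A = 1%N.
Proof.
have e : A = (\col_i (A i i / A i0 i)) *m (\row_j A i0 j).
  apply/matrixP => i j; rewrite !mxE big_ord1 !mxE.
  apply: (mulIf (s_neq0 i0 i)).
  by rewrite (keyL i0) mulrAC divfK // s_neq0.
apply/eqP; rewrite eqn_leq; apply/andP; split.
  rewrite e; apply: leq_trans (mxrankM_maxl _ _) _; exact: rank_leq_col.
rewrite lt0n mxrank_eq0; apply/eqP => h; move: (hdiag i0); rewrite h mxE ltxx.
by [].
Qed.

Lemma bipA (i0 : 'I_n) : bipartite_matrix A.
Proof.
exists [set i | A i0 i < 0].
have pos i : ~~ (A i0 i < 0) -> 0 < A i0 i.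
  by rewrite -leNgt le_eqVlt eq_sym (negbTE (s_neq0 i0 i)).
have same i j : (A i0 i < 0) = (A i0 j < 0) -> A i j < 0.
  have e := keyL i0 i j.
  have [hi|hi] := boolP (A i0 i < 0) => hij.
    by rewrite -(nmulr_lgt0 _ hi) e nmulr_rgt0 // -hij.
  by rewrite -(pmulr_llt0 _ (pos _ hi)) e nmulr_rlt0 // pos // -hij.
have diff i j : A i0 i < 0 -> ~~ (A i0 j < 0) -> 0 < A i j /\ 0 < A j i.
  move=> hi hj; split.
    by rewrite -(nmulr_llt0 _ hi) keyL nmulr_rlt0 // pos.
  by rewrite -(pmulr_lgt0 _ (pos _ hj)) keyL nmulr_rgt0.
split.
  move=> i j; rewrite !inE => hi hj; case: (diff i j hi hj) => *; split; exact: ltW.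
move=> i j; rewrite !inE => hij; split; apply: ltW; apply: same => //.
Qed.

End Main.

Theorem mainTheorem10 (R : realFieldType) (n : nat) (A : 'M[R]_n)
  (hn : (0 < n)%N)
  (hdiag : forall i : 'I_n, A i i < 0)
  (hminors : forall sigma : {set 'I_n},
      (#|sigma| = 2)%N \/ (#|sigma| = 3)%N -> principal_minor A sigma = 0) :
  conn_graph_complete A /\ bipartite_matrix A /\ \rank A = 1%N.
Proof.
have hm2 (s : {set 'I_n}) (h : #|s| = 2%N) : principal_minor A s = 0 by apply: hminors; left.
have hm3 (s : {set 'I_n}) (h : #|s| = 3%N) : principal_minor A s = 0 by apply: hminors; right.
split; first exact: (@completeA R n A hdiag hm2).
split; first exact: (@bipA R n A hdiag hm2 hm3 (Ordinal hn)).
exact: (@rank1 R n A hdiag hm2 hm3 (Ordinal hn)).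
Qed.
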